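(* Consider $n$ processes running the Median-based Byzantine Agreement algorithm (described in the context) with any parameter $\alpha$ satisfying $0 \le \alpha < \lceil n/6 \rceil - 1$, in a system with fewer than $\lfloor n/3 \rfloor$ Byzantine processes. Then the algorithm solves Multi-valued Byzantine Agreement with interval validity: (consistency) all non-faulty processes output the same value $d$, and (interval validity) $d \in \{\min T,\dots,\max T\}$, where $T$ is the multiset of inputs of the non-faulty processes.
   Context: System model: $n$ processes $p_1,\dots,p_n$ communicate over a complete network in fully synchronous rounds (every message sent in a round is delivered before the next round); the receiver of a message knows its sender. A Byzantine (faulty) process may deviate arbitrarily from the protocol, e.g. send different messages to different processes or omit messages; the other processes are non-faulty. Each process $p_i$ has an input value $v_i$ from a totally ordered domain $V$ (integers); $\bot \notin V$ is a special default value. WeakMVBA: a Byzantine agreement protocol (tolerating the given number of Byzantine processes) in which each process has an input and all non-faulty processes terminate with: (consistency) the same decision value; (weak validity) if all non-faulty processes have the same input $v$, the decision is $v$; otherwise the decision is some value of $V\cup\{\bot\}$. Median-based Byzantine Agreement algorithm with parameter $\alpha$, run by a process with input $v$: (1) send $v$ to all processes (including itself); initialize an array $A[1..n]$ to $\bot$ and set $A[i]$ to the value received from $p_i$. (2) For each $i=1,\dots,n$, in parallel, run an instance of WeakMVBA in which this process uses input $A[i]$, and replace $A[i]$ by the decision of that instance. (3) Output select\_value$(A)$, defined as: delete all $\bot$ entries of $A$ to obtain a list $A_{\not\bot}$ of length $k$; let $C[u]$ be the number of occurrences of $u$ in $A_{\not\bot}$ and let $m$ be a value maximizing $C[m]$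 (ties broken by a fixed deterministic rule); if $C[m] \ge \lfloor k/3\rfloor + 1 + \alpha$, output $m$; otherwise sort $A_{\not\bot}$ in nondecreasing order and output its median element (the entry at position $\lfloor k/2 \rfloor$; for even $k$ the lower of the two middle values). *)

(* Defs.v *)
From mathcomp Require Import all_boot all_order all_algebra.
Set Implicit Arguments. Unset Strict Implicit. Unset Printing Implicit Defensive.
Import Order.TTheory GRing.Theory Num.Theory.

(* Values: V = int; the default value bot is modelled by [None : option int]. *)

Definition mode_picker (pick : seq int -> int) : Prop :=
  forall s : seq int, s != [::] ->
    pick s \in s /\ forall u : int, (count_mem u s <= count_mem (pick s) s)%N.

(* select_value(A): drop bot entries (keeping order), k = length,
   m = picked mode; if C[m] >= floor(k/3) + 1 + alpha output m, else output
   the lower median of the sorted list (0-indexed position (k-1)/2). *)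
Definition select_value (pick : seq int -> int) (alpha : nat)
    (A : seq (option int)) : int :=
  let s := pmap id A in
  let k := size s in
  let m := pick s in
  if (k %/ 3 + 1 + alpha <= count_mem m s)%N then m
  else nth 0%R (sort (fun x y : int => (x <= y)%R) s) (k.-1 %/ 2).

Definition ceil_div6 (n : nat) : nat := (n + 5) %/ 6.

(* Specification of the n parallel WeakMVBA instances, used as a black box:
   [inp i k] is the input of process i to instance k, [dec i k] its decision. *)
Definition WeakMVBA_instances n (F : {set 'I_n})
    (inp dec : 'I_n -> 'I_n -> option int) : Prop :=
  forall k : 'I_n,
    (forall i j, i \notin F -> j \notin F -> dec i k = dec j k) /\
    (forall x : int, (forall i, i \notin F -> inp i k = Some x) ->
       forall i, i \notin F -> dec i k = Some x).

Definition median_BA_output n (pick : seq int -> int) (alpha : nat)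
    (dec : 'I_n -> 'I_n -> option int) (i : 'I_n) : int :=
  select_value pick alpha [seq dec i k | k <- enum 'I_n].

(* Main.v *)
Require Import Defs.
From mathcomp Require Import all_boot all_order all_algebra.
From mathcomp Require Import zify.
Import Order.TTheory GRing.Theory Num.Theory.

Lemma cnt_card n (F : {set 'I_n}) : count (fun k => k \in F) (enum 'I_n) = #|F|.
Proof.
rewrite cardE -size_filter. congr size. rewrite /enum_mem -filter_predI.
apply: eq_filter => x /=. by rewrite andbT.
Qed.

Lemma count_pmap_split (T : Type) (g : T -> option int) (a : pred T)
  (P : pred int) l :
  count P (pmap id (map g l)) =
  count P (pmap id (map g (filter a l))) +
  count P (pmap id (map g (filter (predC a) l))).
Proof.
elim: l => [|x l IH] //=.
case: (a x) => /=; case: (g x) => [y|] /=; rewrite IH //; lia.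
Qed.

Lemma pmap_some_map (T : Type) (v : T -> int) l :
  pmap id (map (fun k => Some (v k)) l) = map v l.
Proof. by elim: l => [|x l IH] //=; rewrite IH. Qed.

Lemma sorted_count_le (t : seq int) p :
  sorted (fun x y : int => (x <= y)%R) t -> (p < size t)%N ->
  (p.+1 <= count (fun x => x <= nth 0 t p)%R t)%N.
Proof.
move=> st hp.
have hall : all (fun x => x <= nth 0 t p)%R (take p.+1 t).
  apply/allP => x /(nthP 0%R) [i hi <-].
  rewrite size_takel // in hi.
  rewrite nth_take //.
  apply: (sorted_leq_nth le_trans lexx 0%R st); rewrite ?inE /=; lia.
move: hall; rewrite all_count => /eqP.
rewrite size_takel // => h.
have e := count_cat (fun x => x <= nth 0 t p)%R (take p.+1 t) (drop p.+1 t).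
rewrite cat_take_drop in e. lia.
Qed.

Lemma sorted_count_ge (t : seq int) p :
  sorted (fun x y : int => (x <= y)%R) t -> (p < size t)%N ->
  (size t - p <= count (fun x => nth 0 t p <= x)%R t)%N.
Proof.
move=> st hp.
have hall : all (fun x => nth 0 t p <= x)%R (drop p t).
  apply/allP => x /(nthP 0%R) [i hi <-].
  rewrite size_drop in hi.
  rewrite nth_drop //.
  apply: (sorted_leq_nth le_trans lexx 0%R st); rewrite ?inE /=; try lia; by rewrite -ltn_subRL.
move: hall; rewrite all_count => /eqP.
rewrite size_drop => h.
have e := count_cat (fun x => nth 0 t p <= x)%R (take p t) (drop p t).
rewrite cat_take_drop in e. by rewrite e h leq_addl.
Qed.

Theorem theorem1 (n alpha : nat) (pick : seq int -> int)
  (Hpick : mode_picker pick)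
  (Halpha : (alpha < ceil_div6 n - 1)%N)
  (F : {set 'I_n}) (HF : (#|F| < n %/ 3)%N)
  (v : 'I_n -> int)
  (recv : 'I_n -> 'I_n -> option int)
  (Hrecv : forall i j, i \notin F -> j \notin F -> recv i j = Some (v j))
  (dec : 'I_n -> 'I_n -> option int)
  (Hdec : WeakMVBA_instances F recv dec) :
  exists d : int,
    (forall i, i \notin F -> median_BA_output pick alpha dec i = d) /\
    (exists i, i \notin F /\ (v i <= d)%R) /\
    (exists j, j \notin F /\ (d <= v j)%R).
Proof.
set a := fun k : 'I_n => k \in F.
set l := enum 'I_n.
set hon := filter (predC a) l.
set bad := filter a l.
have Hsz : (count a l + count (predC a) l = n)%N
  by rewrite count_predC size_enum_ord.
have Hca : count a l = #|F| by rewrite cnt_card.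
have [i0 hi0] : exists i0, i0 \notin F.
  have : has (predC a) l by rewrite has_count; lia.
  by move=> /hasP [x _ hx]; exists x.
set A := [seq dec i0 k | k <- l].
exists (select_value pick alpha A).
have Hhon : pmap id (map (dec i0) hon) = map v hon.
  rewrite -(@pmap_some_map _ v hon); congr pmap.
  apply/eq_in_map => k; rewrite mem_filter /= => /andP [hk _].
  apply: (proj2 (Hdec k)) => // i hi; exact: Hrecv.
set h := map v hon.
set b := pmap id (map (dec i0) bad).
set s := pmap id A.
have Hcnt : forall P : pred int, count P s = (count P h + count P b)%N.
  move=> P; rewrite /s /A (count_pmap_split _ _ a) -/bad -/hon -/b Hhon -/h.
  by rewrite addnC.
have Hh : size h = (n - #|F|)%N by rewrite size_map size_filter; lia.
have Hb : (size b <= #|F|)%N.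
  rewrite /b size_pmap; apply: leq_trans (count_size _ _) _.
  by rewrite size_map /bad size_filter Hca.
have Hk : size s = (size h + size b)%N.
  by rewrite -!count_predT Hcnt.
have Hcb : forall P, (count P b <= size b)%N by move=> P; exact: count_size.
have Hhonest : forall P : pred int, (0 < count P h)%N ->
    exists j, j \notin F /\ P (v j).
  move=> P; rewrite -has_count => /hasP [x /mapP [j hj ->] hx].
  by exists j; move: hj; rewrite mem_filter /= => /andP [hj _].
split.
  move=> i hi; rewrite /median_BA_output; congr select_value.
  apply: eq_map => k; exact: (proj1 (Hdec k)).
rewrite /select_value -/s.
case: ifP => hm.
  have := Hcb (pred1 (pick s)); have := Hcnt (pred1 (pick s)).
  move=> e1 e2.
  have [j [hj /eqP hv]] : exists j, j \notin F /\ pred1 (pick s) (v j).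
    apply: Hhonest.
    move: hm; rewrite e1 => hm. lia.
  by split; exists j; rewrite hv.
set t := sort _ s.
have st : sorted (fun x y : int => (x <= y)%R) t by apply: sort_sorted => x y; apply: le_total.
have szt : size t = size s by rewrite size_sort.
have Hct : forall P, count P t = count P s.
  have pts : perm_eq t s by rewrite /t perm_sort perm_refl.
  by move/permP: pts.
have hp : ((size s).-1 %/ 2 < size t)%N by rewrite szt; lia.
split.
  apply: (Hhonest (fun x => x <= nth 0 t ((size s).-1 %/ 2))%R).
  have := sorted_count_le _ _ st hp; rewrite Hct Hcnt.
  have := Hcb (fun x => x <= nth 0 t ((size s).-1 %/ 2))%R.
  have hB : (size b <= (size s).-1 %/ 2)%N by lia.
  move=> h2 h1; rewrite lt0n; apply/eqP => c0; move: h1; rewrite c0 add0n => h1.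
  by have := leq_trans h1 (leq_trans h2 hB); rewrite ltnn.
apply: (Hhonest (fun x => nth 0 t ((size s).-1 %/ 2) <= x)%R).
have := sorted_count_ge _ _ st hp; rewrite Hct Hcnt.
have := Hcb (fun x => nth 0 t ((size s).-1 %/ 2) <= x)%R.
have hB : (size b < size s - (size s).-1 %/ 2)%N by lia.
move=> h2 h1; rewrite lt0n; apply/eqP => c0; move: h1; rewrite c0 add0n szt => h1.
by have := leq_trans hB (leq_trans h1 h2); rewrite ltnn.
Qed.
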